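(* Let $S=\{h_{\bm s}: \bm s\in\{\pm e_i,\ \pm e_j\pm e_k \mid 1\le i\le N,\ 1\le j<k\le N\}\}\subset\mathcal{H}_N$, let $\langle S\rangle$ be the Lie subalgebra of $\mathcal{H}_N$ generated by $S$, and let $L_S=\{\bm r\in\mathbb{Z}^N : h_{\bm r}\in\langle S\rangle\}$. Then $L_S=\mathbb{Z}^N$.
   Context: $\mathbb{K}$ is an algebraically closed field of characteristic zero, $N=2m\ge2$ even, $e_1,\dots,e_N$ the standard basis of $\mathbb{Z}^N\subset\mathbb{K}^N$, $(\cdot,\cdot)$ the bilinear form with $(e_i,e_j)=\delta_{ij}$. Let $A_N=\mathbb{K}[t_1^{\pm1},\dots,t_N^{\pm1}]$, $d_i=t_i\frac{\partial}{\partial t_i}$, $t^{\bm r}=t_1^{r_1}\cdots t_N^{r_N}$, $D(u,\bm r)=\sum_i u_it^{\bm r}d_i$. Let $\bm J=\begin{pmatrix} O_m & I_m\\ -I_m & O_m\end{pmatrix}$, $\overline{\bm r}=\bm J\bm r$, $h_{\bm r}=D(\overline{\bm r},\bm r)$ (so $h_{\bm 0}=0$). The Hamiltonian Lie algebra is $\mathcal{H}_N=\operatorname{span}_{\mathbb{K}}\{h_{\bm r}:\bm r\ne\bm0\}\oplus\operatorname{span}_{\mathbb{K}}\{d_1,\dots,d_N\}$ with commutator bracket; $[h_{\bm r},h_{\bm s}]=(\overline{\bm r},\bm s)h_{\bm r+\bm s}$. *)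

(* Defs.v *)
From HB Require Import structures.
From mathcomp Require Import all_boot all_order all_algebra all_field.
Set Implicit Arguments. Unset Strict Implicit. Unset Printing Implicit Defensive.
Import Order.TTheory GRing.Theory Num.Theory.
Local Open Scope ring_scope.

(* Hamiltonian Lie algebra H_N, N = m + m, over a field K.  An element of H_N is represented as a pair
   (formal finite linear combination  sum a * h_r  given as a list of
    (a, r) pairs,  vector u in K^N standing for D(u,0) = sum u_i d_i).
   Two representatives denote the same element of H_N iff they have the
   same d-part and, for every r <> 0, the same total coefficient on h_r
   (h_0 = 0, so entries with r = 0 are discarded). *)

Section Hamiltonian.
Variables (K : fieldType) (m : nat).
Local Notation N := (m + m)%N.
Local Notation vecZ := 'rV[int]_N.

(* \overline{r} = J r with J = [[0, I_m], [-I_m, 0]] *)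
Definition Jbar (r : vecZ) : vecZ := row_mx (rsubmx r) (- lsubmx r).

Definition formZ (x y : vecZ) : int := \sum_(i < N) x 0 i * y 0 i.

Definition formKZ (u : 'rV[K]_N) (s : vecZ) : K := \sum_(i < N) u 0 i * (s 0 i)%:~R.

Definition elt := (seq (K * vecZ) * 'rV[K]_N)%type.

Definition coef (X : elt) (r : vecZ) : K :=
  \sum_(p <- X.1 | p.2 == r) p.1.

Definition elt_eq (X Y : elt) : Prop :=
  X.2 = Y.2 /\ forall r : vecZ, r != 0 -> coef X r = coef Y r.

Definition hvec (r : vecZ) : elt := ([:: (1, r)], 0).

Definition elt_add (X Y : elt) : elt := (X.1 ++ Y.1, X.2 + Y.2).
Definition elt_scale (c : K) (X : elt) : elt :=
  ([seq (c * p.1, p.2) | p <- X.1], c *: X.2).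

(* the commutator bracket, extended bilinearly from
   [h_r, h_s] = (rbar, s) h_{r+s},  [d_i, h_s] = s_i h_s,  [d_i, d_j] = 0 *)
Definition elt_br (X Y : elt) : elt :=
  ([seq (p.1 * q.1 * (formZ (Jbar p.2) q.2)%:~R, p.2 + q.2) | p <- X.1, q <- Y.1]
   ++ [seq (formKZ X.2 q.2 * q.1, q.2) | q <- Y.1]
   ++ [seq (- (formKZ Y.2 p.2 * p.1), p.2) | p <- X.1], 0).

Definition unitZ (i : 'I_N) : vecZ := delta_mx 0 i.

Definition in_S_index (s : vecZ) : Prop :=
  (exists i : 'I_N, s = unitZ i \/ s = - unitZ i) \/
  (exists (j k : 'I_N) (a b : int), (j < k)%N /\ (a = 1 \/ a = -1) /\
       (b = 1 \/ b = -1) /\ s = a *: unitZ j + b *: unitZ k).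

Inductive gen : elt -> Prop :=
| gen_S : forall s, in_S_index s -> gen (hvec s)
| gen_add : forall X Y, gen X -> gen Y -> gen (elt_add X Y)
| gen_scale : forall c X, gen X -> gen (elt_scale c X)
| gen_br : forall X Y, gen X -> gen Y -> gen (elt_br X Y).

Definition L_S (r : vecZ) : Prop := exists X, gen X /\ elt_eq X (hvec r).

End Hamiltonian.

(* Main.v *)
Require Import Defs.
From HB Require Import structures.
From mathcomp Require Import all_boot all_order all_algebra all_field.
From mathcomp Require Import zify.
Set Implicit Arguments. Unset Strict Implicit. Unset Printing Implicit Defensive.
Import Order.TTheory GRing.Theory Num.Theory.
Local Open Scope ring_scope.

Definition Clean (K : fieldType) (m : nat) (c : K) (r : 'rV[int]_(m + m)) (X : elt K m) :=
  X.2 = 0 /\ exists l, X.1 = (c, r) :: l /\ all (fun p => p.1 == 0) l.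

Notation fZ := Defs.formZ.
Arguments Clean {K m} c r X.

Lemma formKZ0 (K : fieldType) (m : nat) (s : 'rV[int]_(m + m)) : formKZ (0 : 'rV[K]_(m+m)) s = 0.
Proof. by rewrite /formKZ big1 // => i _; rewrite mxE mul0r. Qed.

Lemma clean_br (K : fieldType) (m : nat) c1 c2 (r1 r2 : 'rV[int]_(m + m)) (X Y : elt K m) :
  Clean c1 r1 X -> Clean c2 r2 Y ->
  Clean (c1 * c2 * (fZ (Jbar r1) r2)%:~R) (r1 + r2) (elt_br X Y).
Proof.
case=> HX2 [l1 [HX1 Hl1]] [HY2 [l2 [HY1 Hl2]]].
split; first by [].
pose f := fun (p q : K * 'rV[int]_(m + m)) => (p.1 * q.1 * (fZ (Jbar p.2) q.2)%:~R, p.2 + q.2).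
exists ([seq f (c1, r1) q | q <- l2] ++ [seq f p q | p <- l1, q <- (c2, r2) :: l2]
   ++ [seq (formKZ X.2 q.2 * q.1, q.2) | q <- Y.1]
   ++ [seq (- (formKZ Y.2 p.2 * p.1), p.2) | p <- X.1]).
split; first by rewrite /elt_br /= HX1 HY1 /= -catA.
rewrite HX2 HY2 !all_cat all_map; apply/and4P; split.
- apply/allP => q qin /=; by move/allP: Hl2 => /(_ q qin)/eqP ->; rewrite mulr0 mul0r.
- apply/all_allpairsP => p q pin _ /=.
  by move/allP: Hl1 => /(_ p pin)/eqP ->; rewrite !mul0r.
- rewrite all_map; apply/allP => q _ /=; by rewrite formKZ0 mul0r.
- rewrite all_map; apply/allP => q _ /=; by rewrite formKZ0 mul0r oppr0.
Qed.

Lemma clean_scale (K : fieldType) (m : nat) a c (r : 'rV[int]_(m + m)) (X : elt K m) :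
  Clean c r X -> Clean (a * c) r (elt_scale a X).
Proof.
case=> HX2 [l [HX1 Hl]]; split; first by rewrite /elt_scale /= HX2 scaler0.
rewrite /elt_scale HX1 /=; eexists; split; first reflexivity.
rewrite all_map; apply/allP => p pin /=.
by move/allP: Hl => /(_ p pin)/eqP ->; rewrite mulr0.
Qed.

Lemma clean_coef (K : fieldType) (m : nat) c (r : 'rV[int]_(m + m)) (X : elt K m) (t : 'rV[int]_(m + m)) :
  Clean c r X -> coef X t = if r == t then c else 0.
Proof.
case=> _ [l [HX1 Hl]]; rewrite /coef HX1 big_cons /=.
rewrite big1_seq ?addr0 //= => p /andP[_ pin].
by move/allP: Hl => /(_ p pin)/eqP.
Qed.

Lemma clean_hvec (K : fieldType) (m : nat) (r : 'rV[int]_(m + m)) : Clean 1 r (hvec K r).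
Proof. by split=> //; exists [::]. Qed.

Lemma clean_eq (K : fieldType) (m : nat) c (r : 'rV[int]_(m + m)) (X Y : elt K m) :
  Clean c r X -> Clean c r Y -> elt_eq X Y.
Proof.
move=> HX HY; split; first by rewrite HX.1 HY.1.
by move=> t _; rewrite (clean_coef t HX) (clean_coef t HY).
Qed.

Lemma intr_neq0 (K : fieldType) (hK : [pchar K] =i pred0) (z : int) : z != 0 -> (z%:~R : K) != 0.
Proof.
have H := (GRing.pcharf0P K).1 hK.
case: z => n nz.
- by rewrite -pmulrn H; move: nz; apply: contra => /eqP ->.
- by rewrite NegzE mulrNz oppr_eq0 -pmulrn H.
Qed.
Definition partner (m : nat) (p : 'I_(m + m)) : 'I_(m + m) :=
  match split p with inl i => rshift m i | inr j => lshift m j end.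
Definition sg (m : nat) (p : 'I_(m + m)) : int :=
  match split p with inl _ => 1 | inr _ => -1 end.

Lemma split_l (m : nat) (i : 'I_m) : split (lshift m i) = inl i.
Proof. exact: (unsplitK (inl i)). Qed.
Lemma split_r (m : nat) (i : 'I_m) : split (rshift m i) = inr i.
Proof. exact: (unsplitK (inr i)). Qed.

Lemma Jbar_e (m : nat) (r : 'rV[int]_(m + m)) (p : 'I_(m + m)) :
  Jbar r 0 p = sg p * r 0 (partner p).
Proof.
rewrite /sg /partner; case E: (split p) => [i|j]; rewrite -[p]splitK E /= /Jbar.
- by rewrite row_mxEl mxE mul1r.
- by rewrite row_mxEr !mxE mulN1r.
Qed.

Lemma partnerK (m : nat) : involutive (@partner m).
Proof.
move=> p; rewrite /partner; case E: (split p) => [i|j].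
- by rewrite split_r -[p]splitK E.
- by rewrite split_l -[p]splitK E.
Qed.

Lemma partner_neq (m : nat) (p : 'I_(m + m)) : partner p != p.
Proof.
rewrite /partner; case E: (split p) => [i|j]; rewrite -[p in _ != p]splitK E /=;
  apply/eqP => /(congr1 val) /=.
- by have := ltn_ord i; lia.
- by have := ltn_ord j; lia.
Qed.

Lemma sg_partner (m : nat) (p : 'I_(m + m)) : sg (partner p) = - sg p.
Proof.
rewrite /sg /partner; case E: (split p) => [i|j]; by rewrite ?split_r ?split_l.
Qed.

Lemma sg_sq (m : nat) (p : 'I_(m + m)) : sg p * sg p = 1.
Proof. by rewrite /sg; case: (split p). Qed.

Lemma sg_neq0 (m : nat) (p : 'I_(m + m)) : sg p != 0.
Proof. by rewrite /sg; case: (split p). Qed.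

Definition unitZ' (m : nat) (i : 'I_(m + m)) : 'rV[int]_(m + m) := unitZ i.

Lemma unitZ_e (m : nat) (i j : 'I_(m + m)) : unitZ i 0 j = (i == j)%:R.
Proof. by rewrite /unitZ mxE eq_sym. Qed.

Lemma fZ_unit (m : nat) (x : 'rV[int]_(m + m)) p : fZ x (unitZ p) = x 0 p.
Proof.
rewrite /Defs.formZ (bigD1 p) //= unitZ_e eqxx mulr1 big1 ?addr0 // => j /negbTE jp.
by rewrite unitZ_e eq_sym jp mulr0.
Qed.

Lemma fZD (m : nat) (x u v : 'rV[int]_(m + m)) : fZ x (u + v) = fZ x u + fZ x v.
Proof. by rewrite /Defs.formZ -big_split; apply: eq_bigr => i _; rewrite mxE mulrDr. Qed.

Lemma fZZ (m : nat) (x u : 'rV[int]_(m + m)) a : fZ x (a *: u) = a * fZ x u.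
Proof. by rewrite /Defs.formZ mulr_sumr; apply: eq_bigr => i _; rewrite mxE mulrCA. Qed.

Lemma fZB1 (m : nat) (x y t : 'rV[int]_(m + m)) : fZ (x - y) t = fZ x t - fZ y t.
Proof.
rewrite /Defs.formZ -sumrB; apply: eq_bigr => i _; by rewrite !mxE mulrBl.
Qed.

Lemma JbarB (m : nat) (r s : 'rV[int]_(m + m)) : Jbar (r - s) = Jbar r - Jbar s.
Proof.
apply/rowP => j; have -> : (Jbar r - Jbar s) 0 j = Jbar r 0 j - Jbar s 0 j by rewrite !mxE.
by rewrite !Jbar_e !mxE mulrBr.
Qed.

Lemma fZ_alt (m : nat) (s : 'rV[int]_(m + m)) : fZ (Jbar s) s = 0.
Proof.
have inj : injective (@partner m) by apply: can_inj (@partnerK m).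
set S := fZ (Jbar s) s.
have E : S = - S.
  rewrite {1}/S /Defs.formZ (reindex_inj inj) /= -sumrN; apply: eq_bigr => p _.
  by rewrite !Jbar_e partnerK sg_partner !mulNr mulrAC.
lia.
Qed.

Definition L1 (m : nat) (x : 'rV[int]_(m + m)) : nat := (\sum_(i < m + m) `|x 0%R i|)%N.

Lemma upd_e (m : nat) (x : 'rV[int]_(m + m)) j c i :
  (x + c *: unitZ j) 0 i = x 0 i + c * (j == i)%:R.
Proof. by rewrite /unitZ !mxE eqxx /= eq_sym. Qed.

Lemma L1_upd (m : nat) (x : 'rV[int]_(m + m)) j c :
  (L1 (x + c *: unitZ j) + `|x 0%R j|)%N = (L1 x + `|(x 0%R j + c)%R|)%N.
Proof.
rewrite /L1 (bigD1 j) //= [in RHS](bigD1 j) //= upd_e eqxx mulr1.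
rewrite (eq_bigr (fun i => `|x 0%R i|%N)); first lia.
by move=> i /negbTE ij; rewrite upd_e eq_sym ij mulr0 addr0.
Qed.

Lemma L1_ge (m : nat) (x : 'rV[int]_(m + m)) j : (`|x 0%R j| <= L1 x)%N.
Proof. by rewrite /L1 (bigD1 j) //= leq_addr. Qed.

Lemma nz_entry (m : nat) (x : 'rV[int]_(m + m)) : x != 0 -> exists j, x 0 j != 0.
Proof.
move=> nx; case: (boolP [exists j, x 0 j != 0]) => [/existsP//|/existsPn H].
by case/eqP: nx; apply/rowP => j; rewrite mxE; apply/eqP; move: (H j); rewrite negbK.
Qed.

Definition G (K : fieldType) (m : nat) (r : 'rV[int]_(m + m)) :=
  exists (c : K) (X : elt K m), c != 0 /\ gen X /\ Clean c r X.

Lemma G_S (K : fieldType) (m : nat) (s : 'rV[int]_(m + m)) : in_S_index s -> G K s.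
Proof. move=> Hs; exists 1, (hvec K s); split; [exact: oner_neq0|split; [exact: gen_S|exact: clean_hvec]]. Qed.

Lemma G_step (K : fieldType) (hK : [pchar K] =i pred0) (m : nat) (a b : 'rV[int]_(m + m)) :
  G K a -> G K b -> fZ (Jbar a) b != 0 -> G K (a + b).
Proof.
move=> [c1 [X [c1n [gX cX]]]] [c2 [Y [c2n [gY cY]]]] nB.
exists (c1 * c2 * (fZ (Jbar a) b)%:~R), (elt_br X Y); split.
  by rewrite !mulf_neq0 // intr_neq0.
by split; [exact: gen_br|exact: clean_br].
Qed.

Definition sgn (z : int) : int := if 0 < z then 1 else -1.

Lemma sgn_abs (z : int) : z != 0 -> (`|z - sgn z| + 1 = `|z|)%N.
Proof. rewrite /sgn; case: ifP => h; lia. Qed.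

Lemma sgn_pm (z : int) : sgn z = 1 \/ sgn z = -1.
Proof. by rewrite /sgn; case: ifP; [left|right]. Qed.

Lemma S1 (m : nat) (a : int) (p : 'I_(m + m)) : a = 1 \/ a = -1 -> in_S_index (a *: unitZ p).
Proof. by move=> [->|->]; left; exists p; [left; rewrite scale1r|right; rewrite scaleN1r]. Qed.

Lemma S2 (m : nat) (a b : int) (p q : 'I_(m + m)) : a = 1 \/ a = -1 -> b = 1 \/ b = -1 ->
  p != q -> in_S_index (a *: unitZ p + b *: unitZ q).
Proof.
move=> Ha Hb pq; right; case: (ltngtP p q) => h.
- by exists p, q, a, b.
- by exists q, p, b, a; rewrite addrC.
- by case/eqP: pq; apply: val_inj.
Qed.

Lemma paired (K : fieldType) (hK : [pchar K] =i pred0) (m n : nat)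
  (IH : forall r : 'rV[int]_(m + m), (L1 r <= n)%N -> r != 0 -> G K r)
  (r : 'rV[int]_(m + m)) (q : 'I_(m + m)) :
  (L1 r <= n.+1)%N -> r 0 q != 0 -> r 0 (partner q) != 0 -> G K r.
Proof.
move=> Hl rq rq'.
set σ := sgn (r 0 q); set s := σ *: unitZ q.
have Es : r - s = r + (- σ) *: unitZ q by rewrite scaleNr.
have Hr' : G K (r - s).
  apply: IH.
  - have := L1_upd r q (- σ); rewrite -Es; have := sgn_abs rq; rewrite -/σ.
    set u := absz (r 0%R q - σ)%R; set v := absz (r 0%R q). lia.
  - rewrite Es.
  - apply/eqP => /(congr1 (fun x : 'rV[int]_(m + m) => x 0 (partner q))); rewrite upd_e.
    rewrite eq_sym (negbTE (partner_neq q)) mulr0 addr0 mxE; exact/eqP.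
have Hs : G K s by apply: G_S; apply: S1; exact: sgn_pm.
have := G_step hK Hr' Hs; rewrite subrK; apply.
rewrite JbarB fZB1 fZ_alt subr0 /s fZZ fZ_unit Jbar_e.
rewrite !mulf_neq0 // ?sg_neq0 // /σ; by case: (sgn_pm (r 0 q)) => ->.
Qed.

Lemma unpaired (K : fieldType) (hK : [pchar K] =i pred0) (m n : nat)
  (IH : forall r : 'rV[int]_(m + m), (L1 r <= n)%N -> r != 0 -> G K r)
  (r : 'rV[int]_(m + m)) (p q : 'I_(m + m)) :
  (L1 r <= n.+1)%N -> r 0 p != 0 -> r 0 q != 0 ->
  (forall j, r 0 j != 0 -> r 0 (partner j) = 0) ->
  (p != q) || (2 <= `|r 0%R q|)%N -> G K r.
Proof.
move=> Hl rp rq H Hpq.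
set σ := sgn (r 0 p).
have Hσ : σ = 1 \/ σ = -1 by exact: sgn_pm.
set s := σ *: unitZ p + (-1) *: unitZ (partner q).
set x := r + (- σ) *: unitZ p.
have Er : r - s = x + 1 *: unitZ (partner q).
  by rewrite /s /x opprD addrA !scaleNr opprK.
have pq' : p != partner q.
  by apply: contraNneq rp => ->; rewrite H.
have Hr' : G K (r - s).
  apply: (paired hK IH (q := q)).
  - have H1 := L1_upd r p (- σ); have H2 := sgn_abs rp; rewrite -/σ -/x in H1 H2.
    have H3 := L1_upd x (partner q) 1; rewrite -Er in H3.
    set u := absz (r 0%R p - σ)%R in H1 H2; set v := absz (r 0%R p) in H1 H2.
    set w := absz (x 0%R (partner q)) in H3; set w' := absz (x 0%R (partner q) + 1)%R in H3.
    have : (w' <= w + 1)%N by rewrite /w /w'; lia.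
    lia.
  - rewrite Er upd_e (negbTE (partner_neq q)) mulr0 addr0 /x upd_e.
    case: (eqVneq p q) Hpq => [pq|npq] /= h; last by rewrite mulr0 addr0.
    rewrite mulr1; case: Hσ => ->; lia.
  - rewrite Er upd_e eqxx mulr1 /x upd_e (negbTE pq') mulr0 addr0 H //.
have Hs : G K s by apply: G_S; apply: S2 => //; right.
have := G_step hK Hr' Hs; rewrite subrK; apply.
rewrite JbarB fZB1 fZ_alt subr0 /s fZD !fZZ !fZ_unit !Jbar_e partnerK (H p rp) mulr0 mulr0 add0r.
rewrite mulN1r oppr_eq0 mulf_neq0 // sg_neq0 //.
Qed.

Lemma allG (K : fieldType) (hK : [pchar K] =i pred0) (m n : nat) :
  forall r : 'rV[int]_(m + m), (L1 r <= n)%N -> r != 0 -> G K r.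
Proof.
elim: n => [|n IH] r Hl rnz.
  case: (nz_entry rnz) => j rj; have := L1_ge r j; lia.
case: (boolP [exists q, (r 0 q != 0) && (r 0 (partner q) != 0)]).
  by case/existsP => q /andP[h1 h2]; exact: (paired hK IH Hl h1 h2).
move/existsPn => Hn.
have H : forall j, r 0 j != 0 -> r 0 (partner j) = 0.
  by move=> j rj; move: (Hn j); rewrite rj /= => /negPn/eqP.
case: (nz_entry rnz) => q rq.
case: (boolP [exists p, (p != q) && (r 0 p != 0)]).
  case/existsP => p /andP[h1 h2]; by apply: (unpaired hK IH Hl h2 rq H); rewrite h1.
move/existsPn => Hn2.
case: (boolP (2 <= `|r 0%R q|)%N) => h2.
  by apply: (unpaired hK IH Hl rq rq H); rewrite h2 orbT.
have Er : r = (r 0 q) *: unitZ q.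
  have E0 : forall a b : 'I_1, (a == b) = true.
    by move=> a b; apply/eqP; rewrite [a]ord1 [b]ord1.
  apply/rowP => j; rewrite !mxE E0 /=; case: (eqVneq j q) => [->|jq].
    by rewrite mulr1.
  by rewrite mulr0; move: (Hn2 j); rewrite jq /= => /negPn/eqP.
rewrite Er; apply: G_S; apply: S1; lia.
Qed.

Unset Implicit Arguments.

Theorem proposition2p3 (K : closedFieldType) (hK : [pchar K] =i pred0)
  (m : nat) (hm : (0 < m)%N) :
  forall r : 'rV[int]_(m + m), L_S K r.
Proof.
move=> r; case: (eqVneq r 0) => [->|rnz].
  have i0lt : (0 < m + m)%N by rewrite addn_gt0 hm.
  set i0 : 'I_(m + m) := Ordinal i0lt.
  have C : Clean (0 * 1) (unitZ i0) (elt_scale 0 (hvec K (unitZ i0))).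
    exact/clean_scale/clean_hvec.
  exists (elt_scale 0 (hvec K (unitZ i0))); split.
    by apply: gen_scale; apply: gen_S; left; exists i0; left.
  split; first by rewrite C.1.
  move=> t tnz; rewrite (clean_coef t C) (clean_coef t (clean_hvec K (0 : 'rV[int]_(m + m)))).
  rewrite mul0r; case: ifP => _; case: eqP => // E; by move: tnz; rewrite -E eqxx.
have [c [X [cn [gX cX]]]] := allG hK (leqnn (L1 r)) rnz.
exists (elt_scale c^-1 X); split; first exact: gen_scale.
apply: (@clean_eq _ _ 1 r); last exact: clean_hvec.
by rewrite -(mulVf cn); apply: clean_scale.
Qed.
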